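(* Let $\varphi:\mathrm{Mag}(A)\to\mathcal T^{pl}_A$ be the unique linear map with $\varphi(a)=\bullet_a$ for all $a\in A$ and $\varphi(\sigma\rhd\tau)=\varphi(\sigma)\curvearrowright\varphi(\tau)$ for all $\sigma,\tau\in\mathrm{Mag}(A)$. Then $\varphi$ is a linear isomorphism; hence the magmatic algebras $(\mathrm{Mag}(A),\rhd)$ and $(\mathcal T^{pl}_A,\curvearrowright)$ are isomorphic.
   Context: $A$ is a finite set and $\mathbf k$ a field of characteristic zero. $(\mathrm{Mag}(A),\rhd)$ is the free magmatic algebra on $A$ (the linear span of the free magma on $A$, with bilinear product $\rhd$ and no axioms). $T^{pl}_A$ is the set of planar rooted trees with vertices decorated by elements of $A$, $\bullet_a$ the one-vertex tree decorated by $a$, and $\mathcal T^{pl}_A$ the vector space with basis $T^{pl}_A$. The right Butcher product $\sigma\diamond\tau$ of two trees is the tree obtained by grafting the root of $\sigma$ onto the root of $\tau$ as its new rightmost child; every tree with at least two vertices is uniquely of the form $\tau_1\diamond\tau_2$. Left grafting $\curvearrowright:\mathcal T^{pl}_A\times\mathcal T^{pl}_A\to\mathcal T^{pl}_A$ is the bilinear product defined recursively by $\tau\curvearrowright\bullet_a:=\tau\diamond\bullet_a$ and $\tau\curvearrowright(\tau_1\diamond\tau_2):=(\tau\curvearrowright\tau_1)\diamond\tau_2+\tau_1\diamond(\tau\curvearrowright\tau_2)$ for trees $\tau,\tau_1,\tau_2$ (with $\diamond$ extended bilinearly). *)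

(* Defs.v *)
(* with multinomials' monoid algebra {malg k[K]} used as the
   k-vector space with basis K (finitely supported functions K -> k). *)
From HB Require Import structures.
From mathcomp Require Import all_boot all_order all_algebra.
From mathcomp Require Import finmap.
From mathcomp.multinomials Require Import monalg.

Set Implicit Arguments.
Unset Strict Implicit.
Unset Printing Implicit Defensive.

Import GRing.Theory.
Local Open Scope ring_scope.

Inductive magma (A : Type) : Type :=
| MGen  : A -> magma A
| MProd : magma A -> magma A -> magma A.
Arguments MGen {A} _.
Arguments MProd {A} _ _.

Inductive ptree (A : Type) : Type :=
| PNode : A -> seq (ptree A) -> ptree A.
Arguments PNode {A} _ _.

Section Countable.
Variable A : countType.

Fixpoint magma_enc (m : magma A) : GenTree.tree A :=
  match m with
  | MGen a => GenTree.Leaf a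
  | MProd s t => GenTree.Node 0 [:: magma_enc s; magma_enc t]
  end.
Fixpoint magma_dec (g : GenTree.tree A) : option (magma A) :=
  match g with
  | GenTree.Leaf a => Some (MGen a)
  | GenTree.Node _ [:: s; t] =>
      match magma_dec s, magma_dec t with
      | Some s', Some t' => Some (MProd s' t')
      | _, _ => None
      end
  | _ => None
  end.
Lemma magma_encK : pcancel magma_enc magma_dec.
Proof. by elim=> [a|s IHs t IHt] //=; rewrite IHs IHt. Qed.
HB.instance Definition _ := Countable.copy (magma A) (pcan_type magma_encK).

Fixpoint ptree_enc (t : ptree A) : GenTree.tree A :=
  match t with
  | PNode a cs => GenTree.Node 0 (GenTree.Leaf a :: map ptree_enc cs)
  end.
Fixpoint ptree_dec (g : GenTree.tree A) : option (ptree A) :=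
  match g with
  | GenTree.Node _ (GenTree.Leaf a :: cs) =>
      Some (PNode a (pmap ptree_dec cs))
  | _ => None
  end.
Lemma ptree_encK_aux : forall t, ptree_dec (ptree_enc t) = Some t.
Proof.
fix IH 1; move=> [a cs] /=; congr (Some (PNode a _)).
elim: cs => [|c cs IHcs] //=; by rewrite IH IHcs.
Qed.
Lemma ptree_encK : pcancel ptree_enc ptree_dec.
Proof. exact: ptree_encK_aux. Qed.
HB.instance Definition _ := Countable.copy (ptree A) (pcan_type ptree_encK).
End Countable.

Notation Mag k A := {malg k[magma A]}.
Notation Tpl k A := {malg k[ptree A]}.

Definition bilin (k : ringType) (K1 K2 : choiceType) (V : lmodType k)
    (f : K1 -> K2 -> V) (X : {malg k[K1]}) (Y : {malg k[K2]}) : V :=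
  \sum_(m <- msupp X) \sum_(n <- msupp Y) (X@_m * Y@_n) *: f m n.

Definition mag_prod (k : ringType) (A : countType) (X Y : Mag k A) : Mag k A :=
  bilin (fun s t => << MProd s t >>) X Y.

(* Right Butcher product on trees: sigma <> tau grafts the root of sigma
   onto the root of tau as its new rightmost child; extended bilinearly. *)
Definition tdiam (A : Type) (s t : ptree A) : ptree A :=
  let: PNode a cs := t in PNode a (rcons cs s).
Definition diam (k : ringType) (A : countType) (X Y : Tpl k A) : Tpl k A :=
  bilin (fun s t => << tdiam s t >>) X Y.

Fixpoint tsize (A : Type) (t : ptree A) : nat :=
  let: PNode _ cs := t in (sumn (map (@tsize A) cs)).+1.

(* Left grafting tau ~> rho on basis trees, following the recursion
     tau ~> .a            = tau <> .a
     tau ~> (t1 <> t2)    = (tau ~> t1) <> t2 + t1 <> (tau ~> t2),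
   where a tree PNode a (rcons cs c) (>= 2 vertices) is c <> PNode a cs.
   The extra nat argument is fuel (instantiated with the number of
   vertices of rho, which strictly decreases along the recursion). *)
Fixpoint graft_fuel (k : ringType) (A : countType) (n : nat)
    (tau rho : ptree A) : Tpl k A :=
  match n with
  | 0 => 0
  | n'.+1 =>
    match rho with
    | PNode a [::] => << tdiam tau (PNode a [::]) >>
    | PNode a (x :: xs) =>
        let c := last x xs in
        let r := PNode a (belast x xs) in
        diam (graft_fuel k n' tau c) << r >>
        + diam << c >> (graft_fuel k n' tau r)
    end
  end.

Definition graft_tree (k : ringType) (A : countType) (tau rho : ptree A)
  : Tpl k A := graft_fuel k (tsize rho) tau rho.

Definition graft (k : ringType) (A : countType) (X Y : Tpl k A) : Tpl k A :=
  bilin (@graft_tree k A) X Y.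

(* Main.v *)
Require Import Defs.
From HB Require Import structures.
From mathcomp Require Import all_boot all_order all_algebra.
From mathcomp Require Import finmap zify.
From mathcomp.multinomials Require Import monalg.
Import GRing.Theory.
Local Open Scope ring_scope.


Set Implicit Arguments.
Unset Strict Implicit.
Unset Printing Implicit Defensive.

Section Lext.
Variable (k : fieldType).

Section L1.
Variables (K : choiceType) (V : lmodType k) (F : K -> V).
Definition lext (X : {malg k[K]}) : V := \sum_(m <- msupp X) X@_m *: F m.

Lemma lextEw (d : {fset K}) X : (msupp X `<=` d)%fset ->
  lext X = \sum_(m <- d) X@_m *: F m.
Proof.
move=> le; rewrite /lext (big_fset_incl _ le) //= => x xd /mcoeff_outdom ->.
by rewrite scale0r.
Qed.

Lemma lext_is_linear : linear lext.
Proof.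
move=> a X Y.
have h: (msupp (a *: X + Y) `<=` msupp X `|` msupp Y)%fset.
  apply: fsubset_trans (msuppD_le _ _) _; apply: fsetSU; exact: msuppZ_le.
rewrite (lextEw (fsubsetUl (msupp X) (msupp Y))).
rewrite (lextEw (fsubsetUr (msupp X) (msupp Y))) (lextEw h).
rewrite scaler_sumr -big_split /=; apply: eq_bigr => m _.
by rewrite mcoeffD mcoeffZ scalerDl scalerA.
Qed.

HB.instance Definition _ := GRing.isLinear.Build k {malg k[K]} V *:%R lext
  lext_is_linear.

Lemma lextU m : lext << m >> = F m.
Proof. by rewrite (lextEw msuppU_le) big_seq_fset1 mcoeffUU scale1r. Qed.

End L1.

Lemma malgUZ (K : choiceType) (c : k) (m : K) : << c *g m >> = c *: << m >>.
Proof.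
by apply/malgP => x; rewrite mcoeffZ !mcoeffU mulr_natr.
Qed.

Lemma lext_id (K : choiceType) (X : {malg k[K]}) : lext (fun m => << m >>) X = X.
Proof.
rewrite [RHS]monalgE /lext; apply: eq_bigr => m _; by rewrite malgUZ.
Qed.


Lemma lext_supp (K K2 : choiceType) (G : K -> {malg k[K2]}) X u :
  u \in msupp (lext G X) -> exists2 m, m \in msupp X & u \in msupp (G m).
Proof.
move=> H; case: (boolP (has (fun m => u \in msupp (G m)) (msupp X))).
  by move/hasP=> [m h1 h2]; exists m.
move/hasPn=> hn; move: H; rewrite -mcoeff_neq0 /lext raddf_sum /= big1_seq ?eqxx //.
move=> m /= /hn; rewrite mcoeffZ -mcoeff_neq0 negbK => /eqP ->; by rewrite mulr0.
Qed.

Lemma lext_linear (K : choiceType) (V W : lmodType k) (L : {linear V -> W})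
  (G : K -> V) X : L (lext G X) = lext (fun m => L (G m)) X.
Proof. by rewrite /lext linear_sum; apply: eq_bigr => m _; rewrite linearZ. Qed.

Lemma lext_swap (K1 K2 : choiceType) (V : lmodType k) (H : K1 -> K2 -> V) X Y :
  lext (fun s => lext (H s) Y) X = lext (fun n => lext (fun s => H s n) X) Y.
Proof.
rewrite /lext; under eq_bigr do rewrite scaler_sumr.
rewrite exchange_big /=; apply: eq_bigr => n _; rewrite scaler_sumr.
by apply: eq_bigr => m _; rewrite !scalerA mulrC.
Qed.

Lemma bilinE (K1 K2 : choiceType) (V : lmodType k) (f : K1 -> K2 -> V) X Y :
  bilin f X Y = lext (fun s => lext (f s) Y) X.
Proof.
rewrite /bilin /lext; apply: eq_bigr => m _; rewrite scaler_sumr.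
by apply: eq_bigr => n _; rewrite scalerA.
Qed.

End Lext.

Section Bilin.
Variable (k : fieldType).
Variables (K1 K2 : choiceType) (V : lmodType k) (f : K1 -> K2 -> V).

Lemma bilinDl X1 X2 Y : bilin f (X1 + X2) Y = bilin f X1 Y + bilin f X2 Y.
Proof. by rewrite !bilinE linearD. Qed.

Lemma bilinDr X Y1 Y2 : bilin f X (Y1 + Y2) = bilin f X Y1 + bilin f X Y2.
Proof. by rewrite !bilinE !(lext_swap _ X) linearD. Qed.

Lemma bilinBl X1 X2 Y : bilin f (X1 - X2) Y = bilin f X1 Y - bilin f X2 Y.
Proof. by rewrite !bilinE linearB. Qed.

Lemma bilinBr X Y1 Y2 : bilin f X (Y1 - Y2) = bilin f X Y1 - bilin f X Y2.
Proof. by rewrite !bilinE !(lext_swap _ X) linearB. Qed.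

Lemma bilinU a b : bilin f << a >> << b >> = f a b.
Proof. by rewrite bilinE !lextU. Qed.
End Bilin.

Lemma bilin_supp (k : fieldType) (K1 K2 K3 : choiceType)
  (f : K1 -> K2 -> {malg k[K3]}) X Y u :
  u \in msupp (bilin f X Y) ->
  exists a, exists b, [/\ a \in msupp X, b \in msupp Y & u \in msupp (f a b)].
Proof.
rewrite bilinE => /lext_supp [a aX] /lext_supp [b bY] h.
by exists a, b.
Qed.

Lemma supp_split (k : fieldType) (K : choiceType) (X : {malg k[K]}) t0 v :
  v \in msupp X -> v = t0 \/ v \in msupp (X - << t0 >>).
Proof.
rewrite -{1}(subrK << t0 >> X) => /(fsubsetP (msuppD_le _ _)).
rewrite in_fsetU => /orP [] h; first by right.
by left; move/(fsubsetP msuppU_le): h; rewrite in_fset1 => /eqP.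
Qed.

Lemma suppD (k : fieldType) (K : choiceType) (X Y : {malg k[K]}) v :
  v \in msupp (X + Y) -> v \in msupp X \/ v \in msupp Y.
Proof. by move/(fsubsetP (msuppD_le _ _)); rewrite in_fsetU => /orP. Qed.

Lemma suppU (k : fieldType) (K : choiceType) (t : K) v :
  v \in msupp (<< t >> : {malg k[K]}) -> v = t.
Proof. by move/(fsubsetP msuppU_le); rewrite in_fset1 => /eqP. Qed.

Notation tsz := (@Defs.tsize _).
Section Trees.
Variable (k : fieldType) (A : countType).
Implicit Types (s t u v : ptree A).

Definition lg s t : ptree A := let: PNode a cs := t in PNode a (s :: cs).
Definition cdeg t : nat := let: PNode _ cs := t in size cs.

Lemma tsz_tdiam u v : tsz (tdiam u v) = (tsz u + tsz v)%N.
Proof.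
case: v => a cs /=; rewrite map_rcons sumn_rcons.
by rewrite addnC addnS.
Qed.

Lemma cdeg_tdiam u v : cdeg (tdiam u v) = (cdeg v).+1.
Proof. by case: v => a cs /=; rewrite size_rcons. Qed.

Lemma tsz_lg u v : tsz (lg u v) = (tsz u + tsz v)%N.
Proof. by case: v => a cs /=; rewrite addnS. Qed.

Lemma cdeg_lg u v : cdeg (lg u v) = (cdeg v).+1.
Proof. by case: v. Qed.

Lemma tsz_gt0 t : (0 < tsz t)%N.
Proof. by case: t. Qed.

Lemma diam_supp (X Y : Tpl k A) u : u \in msupp (diam X Y) ->
  exists v, exists w, [/\ v \in msupp X, w \in msupp Y & u = tdiam v w].
Proof.
move/bilin_supp=> [v [w [h1 h2 h3]]]; exists v, w; split => //.
exact: suppU h3.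
Qed.

Lemma graft_fuel_cons n s a x xs :
  graft_fuel k n.+1 s (PNode a (x :: xs)) =
  diam (graft_fuel k n s (last x xs)) << PNode a (belast x xs) >>
  + diam << last x xs >> (graft_fuel k n s (PNode a (belast x xs))).
Proof. by []. Qed.

Lemma GT n s t : (tsz t <= n)%N ->
  forall u, u \in msupp (graft_fuel k n s t - << lg s t >>) ->
  tsz u = (tsz s + tsz t)%N /\ cdeg u = cdeg t.
Proof.
elim: n s t => [|n IH] s t.
  by rewrite leqn0 (gtn_eqF (tsz_gt0 t)).
case: t => a [|x xs] hn u.
  by rewrite /= subrr msupp0 inE.
have et : PNode a (x :: xs) = tdiam (last x xs) (PNode a (belast x xs)).
  by rewrite /= -lastI.
set c := last x xs; set r := PNode a (belast x xs).
have hs : tsz (PNode a (x :: xs)) = (tsz c + tsz r)%N by rewrite et tsz_tdiam.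
have hd : cdeg (PNode a (x :: xs)) = (cdeg r).+1 by rewrite et cdeg_tdiam.
have hc : (tsz c <= n)%N.
  by have := tsz_gt0 r; move: hn; rewrite hs; lia.
have hr : (tsz r <= n)%N.
  by have := tsz_gt0 c; move: hn; rewrite hs; lia.
have eL : tdiam c (lg s r) = lg s (PNode a (x :: xs)).
  by rewrite /= /c /r -lastI.
rewrite graft_fuel_cons -/c -/r.
rewrite -[graft_fuel k n s r](subrK << lg s r >>) /diam bilinDr bilinU eL.
rewrite addrA addrK => /suppD [] /diam_supp [v [w [hv hw ->]]].
- rewrite (suppU hw) tsz_tdiam cdeg_tdiam hd; split => //.
  case: (supp_split (lg s c) hv) => [->|/(IH _ _ hc) [-> _]].
    by rewrite tsz_lg hs addnA.
  by rewrite hs addnA.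
- rewrite (suppU hv) tsz_tdiam cdeg_tdiam hd.
  case: (IH _ _ hr _ hw) => -> ->; split => //.
  by rewrite hs addnCA.
Qed.

End Trees.

Fixpoint ltl (s t : seq nat) : bool :=
  match s, t with
  | _, [::] => false
  | [::], _ :: _ => true
  | x :: s', y :: t' => (x < y)%N || ((x == y) && ltl s' t')
  end.

Lemma ltl_irr s : ltl s s = false.
Proof. by elim: s => //= x s ->; rewrite ltnn eqxx. Qed.

Lemma ltl_trans s t u : ltl s t -> ltl t u -> ltl s u.
Proof.
elim: s t u => [|x s IH] [|y t] [|z u] //=.
move=> /orP[h1|/andP[/eqP-> h1]] /orP[h2|/andP[/eqP<- h2]].
- by rewrite (ltn_trans h1 h2).
- by rewrite h1.
- by rewrite h2.
- by rewrite eqxx (IH _ _ h1 h2) orbT.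
Qed.

Lemma ltl_total s t : s != t -> ltl s t || ltl t s.
Proof.
elim: s t => [|x s IH] [|y t] //=.
by case: (ltngtP x y) => //= ->; rewrite eqseq_cons eqxx /=; exact: IH.
Qed.

Lemma ltl_cat_eqsize p p' F F' :
  size p = size p' -> ltl p p' -> ltl (p ++ F) (p' ++ F').
Proof.
elim: p p' => [|x p IH] [|y p'] //= [/IH h] /orP [->|/andP [-> /h ->]] //.
by rewrite orbT.
Qed.

Lemma ltl_cat_same p F F' : ltl F F' -> ltl (p ++ F) (p ++ F').
Proof. by elim: p => //= x p IH h; rewrite eqxx IH ?orbT. Qed.

Section Key.
Variable (k : fieldType) (A : countType).
Implicit Types (s t u v a b : ptree A).

Lemma ptree_ind' (P : ptree A -> Prop) :
  (forall (x : A) cs, foldr (fun c Q => P c /\ Q) True cs -> P (PNode x cs)) ->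
  forall t, P t.
Proof.
move=> H; fix IH 1 => -[x cs]; apply: H.
elim: cs => [|c cs IHcs]; [exact: I | exact: (conj (IH c) IHcs)].
Qed.

Fixpoint key (t : ptree A) : seq nat :=
  let: PNode x cs := t in
  (sumn (map (@Defs.tsize A) cs)).+1 :: size cs :: choice.pickle x :: flatten (map key cs).

Lemma size_key t : size (key t) = (3 * tsz t)%N.
Proof.
elim/ptree_ind': t => a cs IH /=.
suff -> : size (flatten (map key cs)) = (3 * sumn (map (@Defs.tsize A) cs))%N.
  by rewrite mulnS.
elim: cs IH => [|c cs IHcs] //= [hc /IHcs].
by rewrite size_cat hc => ->; rewrite mulnDr.
Qed.

Definition lower u v := (tsz u == tsz v) && ltl (key u) (key v).

Lemma lower_irr u : lower u u = false.
Proof. by rewrite /lower ltl_irr andbF. Qed.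

Lemma lower_size u v : lower u v -> tsz u = tsz v.
Proof. by case/andP => /eqP. Qed.

Lemma C1 u v : tsz u = tsz v -> (cdeg u < cdeg v)%N -> lower u v.
Proof.
by case: u v => [x cs] [y ds] /= e h; rewrite /lower /= e ltnn h /= eqxx.
Qed.

Lemma C2 u v : lower u v -> (cdeg u <= cdeg v)%N.
Proof.
case: u v => [x cs] [y ds] /andP [/eqP /= e]; rewrite e /= ltnn eqxx /=.
by case/orP => [/ltnW //|/andP [/eqP -> _]].
Qed.

Lemma C3 a b a0 b0 : (a = a0 \/ lower a a0) -> (b = b0 \/ lower b b0) ->
  ~ (a = a0 /\ b = b0) -> lower (lg a b) (lg a0 b0).
Proof.
move=> ha hb hne.
have sza : size (key a) = size (key a0).
  by case: ha => [->|/lower_size]; rewrite ?size_key // => ->.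
have eqs : tsz (lg a b) = tsz (lg a0 b0).
  rewrite !tsz_lg; case: ha => [->|/lower_size ->]; case: hb => [->|/lower_size ->] //.
move: eqs hb hne; case: b b0 => [x cs] [y ds] /= eqs hb hne.
rewrite /lower /= eqs ltnn eqxx /= ltnS eqSS.
case: hb hne => [[<- <-]|/andP [/eqP es hl]] hne.
  rewrite ltnn eqxx /= ltnn eqxx /=.
  case: ha hne => [-> []//|/andP [_ hla] _].
  exact: ltl_cat_eqsize.
move: es => /= es; rewrite /= es ltnn eqxx /= in hl.
case/orP: hl => [->//|/andP [-> /orP [->|/andP [-> hl]]]]; rewrite ?orbT //=.
case: ha => [->|/andP [_ hla]].
  by rewrite ltl_cat_same ?orbT.
by rewrite (ltl_cat_eqsize _ _ sza hla) ?orbT.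
Qed.

End Key.

Lemma eq_lext (k : fieldType) (K : choiceType) (V : lmodType k) (F G : K -> V) X :
  (forall m, F m = G m) -> lext F X = lext G X.
Proof. by move=> h; rewrite /lext; apply: eq_bigr => m _; rewrite h. Qed.

Lemma bilin_lextl (k : fieldType) (K K1 K2 : choiceType) (V : lmodType k)
  (f : K1 -> K2 -> V) (G : K -> {malg k[K1]}) X Y :
  bilin f (lext G X) Y = lext (fun s => bilin f (G s) Y) X.
Proof.
rewrite bilinE lext_linear; apply: eq_lext => m; by rewrite bilinE.
Qed.

Lemma bilin_lextr (k : fieldType) (K K1 K2 : choiceType) (V : lmodType k)
  (f : K1 -> K2 -> V) (G : K -> {malg k[K2]}) X Y :
  bilin f X (lext G Y) = lext (fun t => bilin f X (G t)) Y.
Proof.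
rewrite bilinE (@eq_lext _ _ _ _ (fun s => lext (fun t => lext (f s) (G t)) Y)).
  by rewrite lext_swap; apply: eq_lext => t; rewrite bilinE.
by move=> s; rewrite lext_linear.
Qed.

Lemma exists_max (T : eqType) (lt : rel T) :
  (forall x, lt x x = false) -> transitive lt ->
  (forall x y, x != y -> lt x y || lt y x) ->
  forall (s : seq T) x0, x0 \in s ->
  exists2 x, x \in s & forall y, y \in s -> y != x -> lt y x.
Proof.
move=> hirr htr htot; elim => [//|x s IH] x0 _.
case: s IH => [|y s] IH.
  exists x; first by rewrite inE.
  by move=> z; rewrite inE => /eqP ->; rewrite eqxx.
have [m hm hmax] := IH y (mem_head _ _).
case: (eqVneq x m) => [exm|nxm].
  exists m; first by rewrite inE hm orbT.
  move=> z; rewrite inE => /orP [/eqP ->|hz]; first by rewrite exm eqxx.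
  exact: hmax.
case/orP: (htot _ _ nxm) => h.
  exists m; first by rewrite inE hm orbT.
  move=> z; rewrite inE => /orP [/eqP -> _ //|hz]; exact: hmax.
exists x; first by rewrite inE eqxx.
move=> z; rewrite inE => /orP [/eqP -> |hz]; first by rewrite eqxx.
case: (eqVneq z m) => [-> _ //|nzm _]; exact: htr (hmax _ hz nzm) h.
Qed.

Section Main.
Variable (k : fieldType) (A : countType).
Implicit Types (s t u v a b : ptree A).

Fixpoint Tm (m : magma A) : ptree A :=
  match m with MGen a => PNode a [::] | MProd s t => lg (Tm s) (Tm t) end.

Lemma lg_inj a b a' b' : lg a b = lg a' b' -> a = a' /\ b = b'.
Proof. by case: b b' => x cs [y ds] /= [-> -> ->]. Qed.

Lemma Tm_inj : injective Tm.
Proof.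
elim=> [x|s IHs t IHt] [y|s' t'] /=.
- by case=> ->.
- by case: (Tm t') => z ds.
- by case: (Tm t) => z ds.
- by move/lg_inj => [/IHs -> /IHt ->].
Qed.

Fixpoint Phi (m : magma A) : Tpl k A :=
  match m with
  | MGen a => << PNode a [::] >>
  | MProd s t => graft (Phi s) (Phi t)
  end.

Lemma gt_lower0 a0 b0 u :
  u \in msupp (graft_tree k a0 b0 - << lg a0 b0 >>) -> lower u (lg a0 b0).
Proof.
move/(GT (leqnn _)) => [hs hd]; apply: C1; first by rewrite hs tsz_lg.
by rewrite hd cdeg_lg.
Qed.

Lemma gt_lower a b a0 b0 : (a = a0 \/ lower a a0) -> (b = b0 \/ lower b b0) ->
  ~ (a = a0 /\ b = b0) ->
  forall u, u \in msupp (graft_tree k a b) -> lower u (lg a0 b0).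
Proof.
move=> ha hb hne u /(supp_split (lg a b)) [->|]; first exact: C3.
move/(GT (leqnn _)) => [hs hd]; apply: C1.
  by rewrite hs tsz_lg; case: ha => [->|/lower_size ->];
    case: hb => [->|/lower_size ->].
rewrite hd cdeg_lg ltnS; case: hb => [->//|]; exact: C2.
Qed.

Lemma LEAD m u : u \in msupp (Phi m - << Tm m >>) -> lower u (Tm m).
Proof.
elim: m u => [x|s IHs t IHt] u /=; first by rewrite subrr msupp0 inE.
have es : Phi s = (Phi s - << Tm s >>) + << Tm s >> by rewrite subrK.
have et : Phi t = (Phi t - << Tm t >>) + << Tm t >> by rewrite subrK.
move: (Phi s - << Tm s >>) (Phi t - << Tm t >>) IHs IHt es et.
move=> Rs Rt IHs IHt -> ->.
rewrite /graft bilinDl !bilinDr bilinU -!addrA.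
have nIs : ~ (exists2 a, a \in msupp Rs & a = Tm s).
  by move=> [a ha ea]; move: (IHs _ ha); rewrite ea lower_irr.
have nIt : ~ (exists2 a, a \in msupp Rt & a = Tm t).
  by move=> [a ha ea]; move: (IHt _ ha); rewrite ea lower_irr.
case/suppD => [|/suppD [|/suppD [|]]].
- move/bilin_supp => [a [b [ha hb hu]]].
  apply: (gt_lower (or_intror (IHs _ ha)) (or_intror (IHt _ hb)) _ hu).
  by case=> ea _; apply: nIs; exists a.
- move/bilin_supp => [a [b [ha /suppU -> hu]]].
  apply: (gt_lower (or_intror (IHs _ ha)) (or_introl erefl) _ hu).
  by case=> ea _; apply: nIs; exists a.
- move/bilin_supp => [a [b [/suppU -> hb hu]]].
  apply: (gt_lower (or_introl erefl) (or_intror (IHt _ hb)) _ hu).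
  by case=> _ eb; apply: nIt; exists b.
- exact: gt_lower0.
Qed.

Definition tlt u v :=
  ltl (key u) (key v) || (key u == key v) && (choice.pickle u < choice.pickle v)%N.

Lemma tlt_irr u : tlt u u = false.
Proof. by rewrite /tlt ltl_irr ltnn andbF. Qed.

Lemma tlt_trans : transitive tlt.
Proof.
move=> v u w /orP [h1|/andP [/eqP e1 h1]] /orP [h2|/andP [/eqP e2 h2]];
  rewrite /tlt.
- by rewrite (ltl_trans h1 h2).
- by rewrite -e2 h1.
- by rewrite e1 h2.
- by rewrite e1 e2 eqxx (ltn_trans h1 h2) orbT.
Qed.

Lemma tlt_total u v : u != v -> tlt u v || tlt v u.
Proof.
move=> nuv; rewrite /tlt; case: (eqVneq (key u) (key v)) => [e|ne].
  rewrite e ltl_irr /=.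
  have np : choice.pickle u != choice.pickle v.
    by apply: contra nuv => /eqP /(pcan_inj (@choice.pickleK _)) ->.
  by case: (ltngtP (choice.pickle u) (choice.pickle v)) np.
by rewrite !andFb !orbF; exact: ltl_total.
Qed.

Lemma lower_tlt u v : lower u v -> tlt u v.
Proof. by case/andP => _ h; rewrite /tlt h. Qed.

Lemma Phi_coef m : (Phi m)@_(Tm m) = 1.
Proof.
rewrite -[Phi m](subrK << Tm m >>) mcoeffD mcoeffUU mcoeff_outdom ?add0r //.
by apply/negP => /LEAD; rewrite lower_irr.
Qed.

Lemma Phi_coef0 m m' : tlt (Tm m) (Tm m') -> (Phi m)@_(Tm m') = 0.
Proof.
move=> h; rewrite -[Phi m](subrK << Tm m >>) mcoeffD mcoeffU.
have -> : (Tm m == Tm m') = false.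
  by apply/negP => /eqP e; move: h; rewrite e tlt_irr.
rewrite mulr0n addr0 mcoeff_outdom //; apply/negP => /LEAD /lower_tlt h'.
by move: (tlt_trans h h'); rewrite tlt_irr.
Qed.

Lemma lext_Phi_inj0 X : lext Phi X = 0 -> X = 0.
Proof.
move=> h; case: (eqVneq X 0) => // nX0.
have : msupp X != fset0.
  apply/negP => /eqP e; move/eqP: nX0; apply; apply/malgP => m.
  by rewrite mcoeff0 mcoeff_outdom // e inE.
case/fset0Pn => m0 hm0.
have [mx hmx hmax] := @exists_max _ (fun m m' => tlt (Tm m) (Tm m'))
  (fun x => tlt_irr _) (fun y x z => @tlt_trans (Tm y) (Tm x) (Tm z))
  (fun x y hxy => tlt_total (contra (fun e => introT eqP (Tm_inj (eqP e))) hxy))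
  (msupp X) m0 hm0.
have := congr1 (mcoeff (Tm mx)) h.
rewrite mcoeff0 /lext raddf_sum /= (big_fsetD1 mx) //= mcoeffZ Phi_coef mulr1.
rewrite big1_fset ?addr0; last first.
  move=> m; rewrite in_fsetD1 => /andP [nm hm] _.
  by rewrite mcoeffZ Phi_coef0 ?mulr0 //; exact: hmax.
by move/eqP; rewrite mcoeff_eq0 hmx.
Qed.

Lemma lext_Phi_morph (X Y : Mag k A) :
  lext Phi (mag_prod X Y) = graft (lext Phi X) (lext Phi Y).
Proof.
rewrite /mag_prod bilinE lext_linear /graft bilin_lextl; apply: eq_lext => s.
rewrite lext_linear bilin_lextr; apply: eq_lext => t.
exact: (lextU Phi (MProd s t)).
Qed.

Definition mu t := (tsz t * tsz t + cdeg t)%N.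

Lemma cdeg_lt t : (cdeg t < tsz t)%N.
Proof.
case: t => x cs /=; rewrite ltnS.
elim: cs => //= c cs IH; have := tsz_gt0 c; lia.
Qed.

Lemma mu_lt u v : (tsz u < tsz v)%N -> (mu u < mu v)%N.
Proof. rewrite /mu => h; have := cdeg_lt u; nia. Qed.

Definition inIm (Y : Tpl k A) := exists X, lext Phi X = Y.

Lemma inIm_sum (I : eqType) (r : seq I) (c : I -> k) (F : I -> Tpl k A) :
  (forall i, i \in r -> inIm (F i)) -> inIm (\sum_(i <- r) c i *: F i).
Proof.
elim: r => [|i r IH] h; first by exists 0; rewrite big_nil linear0.
have [Xi hi] := h i (mem_head _ _).
have [Xr hr] : inIm (\sum_(j <- r) c j *: F j).
  by apply: IH => j hj; apply: h; rewrite inE hj orbT.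
by exists (c i *: Xi + Xr); rewrite big_cons -hi -hr linearD linearZ.
Qed.

Lemma inIm_supp Y : (forall u, u \in msupp Y -> inIm << u >>) -> inIm Y.
Proof. by move=> h; rewrite -(lext_id Y) /lext; apply: inIm_sum. Qed.

Lemma surj_tree t : inIm << t >>.
Proof.
suff H : forall n t, (mu t < n)%N -> inIm << t >> by apply: (H (mu t).+1).
elim=> [//|n IH] [x [|c cs]]; rewrite ltnS => hmu.
  by exists << MGen x >>; rewrite lextU.
set r := PNode x cs.
have et : PNode x (c :: cs) = lg c r by [].
have hsz : tsz (PNode x (c :: cs)) = (tsz c + tsz r)%N by rewrite et tsz_lg.
have hdg : cdeg (PNode x (c :: cs)) = (cdeg r).+1 by [].
have [Xc hc] : inIm << c >>.
  apply: IH; apply: leq_trans _ hmu; apply: mu_lt; have := tsz_gt0 r; rewrite hsz; lia.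
have [Xr hr] : inIm << r >>.
  apply: IH; apply: leq_trans _ hmu; apply: mu_lt; have := tsz_gt0 c; rewrite hsz; lia.
have [Z hZ] : inIm (graft_tree k c r - << lg c r >>).
  apply: inIm_supp => u /(GT (leqnn _)) [hs hd]; apply: IH.
  apply: leq_trans _ hmu; rewrite /mu hs hd -hsz hdg; nia.
exists (mag_prod Xc Xr - Z).
transitivity (lext Phi (mag_prod Xc Xr) - lext Phi Z); first exact: linearB.
rewrite lext_Phi_morph hc hr hZ /graft bilinU et.
by rewrite opprB addrCA subrr addr0.
Qed.

End Main.

Theorem lemma2p10 (k : fieldType) (A : finType) (char0 : [pchar k] =i pred0) :
  (exists phi : {linear Mag k A -> Tpl k A},
      (forall a : A, phi << MGen a >> = << PNode a [::] >>) /\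
      (forall x y : Mag k A, phi (mag_prod x y) = graft (phi x) (phi y))) /\
  (forall phi : {linear Mag k A -> Tpl k A},
      (forall a : A, phi << MGen a >> = << PNode a [::] >>) ->
      (forall x y : Mag k A, phi (mag_prod x y) = graft (phi x) (phi y)) ->
      bijective phi).
Proof.
split.
  exists (lext (@Phi k A) : {linear _ -> _}); split.
    by move=> a /=; rewrite lextU.
  by move=> x y /=; rewrite lext_Phi_morph.
move=> phi h1 h2.
have hU : forall m, phi << m >> = Phi k m.
  elim => [a|s IHs t IHt] /=; first exact: h1.
  have -> : << MProd s t >> = mag_prod (<< s >> : Mag k A) << t >>.
    by rewrite /mag_prod bilinU.
  by rewrite h2 IHs IHt.
have hphi : forall X, phi X = lext (@Phi k A) X.
  move=> X; rewrite -{1}(lext_id X) lext_linear; apply: eq_lext => m; exact: hU.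
have inj : injective phi.
  move=> X X' e; apply/eqP; rewrite -subr_eq0; apply/eqP; apply: lext_Phi_inj0.
  by rewrite -(hphi (X - X')) linearB e subrr.
have surj : forall Y, exists X, phi X = Y.
  move=> Y; have [X hX] : exists X, lext (@Phi k A) X = Y.
    by apply: inIm_supp => u _; exact: surj_tree.
  exists X.
  by rewrite hphi.
have surj' : forall Y, exists X, phi X == Y.
  by move=> Y; have [X hX] := surj Y; exists X; rewrite hX.
exists (fun Y => xchoose (surj' Y)).
  by move=> X; apply: inj; apply/eqP; exact: (xchooseP (surj' (phi X))).
by move=> Y; apply/eqP; exact: (xchooseP (surj' Y)).
Qed.
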